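(* Let $q=3^r>3$, and let $$\bar f_2(x_1,x_2)=t\bigl(x_1^{q-4}+x_2^{q-2}\bigr).$$ Then the polynomial $t\bigl(\bar f_2(x_1,x_2)+x_3^{q-2}\bigr)\in\mathbb{F}_q[x_1,x_2,x_3]$, reduced modulo $x_j^q-x_j$, has degree $3(q-2)$.
   Context: $\mathbb{F}_q$ is the finite field with $q$ elements, and $$t(x)=x+\sum_{k=0}^{q-2}x^k\in\mathbb{F}_q[x];$$ this polynomial swaps $0$ and $1$ and fixes every other element. Degree means the total degree of the reduced representative (degree $<q$ in each variable). *)

(* Defs.v *)
From HB Require Import structures.
From mathcomp Require Import all_boot all_order all_algebra all_field.
From mathcomp Require Import mpoly.
Set Implicit Arguments. Unset Strict Implicit. Unset Printing Implicit Defensive.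
Import GRing.Theory.
Local Open Scope ring_scope.

Definition tpoly (R : ringType) (q : nat) (x : R) : R :=
  x + \sum_(k < q.-1) x ^+ k.

(* Reduction of an exponent e modulo x^q = x: 0 stays 0, e>0 becomes the
   unique e' in {1..q-1} with e' = e mod (q-1). *)
Definition red_exp (q e : nat) : nat :=
  if e == 0%N then 0%N else ((e.-1 %% q.-1).+1)%N.

Definition red_mnm (n q : nat) (m : 'X_{1..n}) : 'X_{1..n} :=
  [multinom red_exp q (m i) | i < n].

(* The reduced representative of p modulo the ideal (x_j^q - x_j)_j:
   replace each monomial by its reduction. *)
Definition reduce (n : nat) (R : comRingType) (q : nat) (p : {mpoly R[n]})
  : {mpoly R[n]} :=
  \sum_(m <- msupp p) p@_m *: 'X_[red_mnm q m].

(* Total degree of a polynomial (degree of 0 taken as 0). *)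
Definition tdeg (n : nat) (R : comRingType) (p : {mpoly R[n]}) : nat :=
  (msize p).-1.

(* Main.v *)
Require Import Defs.
From HB Require Import structures.
From mathcomp Require Import all_boot all_order all_algebra all_field.
From mathcomp Require Import mpoly.
From mathcomp Require Import ring zify.
Set Implicit Arguments. Unset Strict Implicit. Unset Printing Implicit Defensive.
Import GRing.Theory.
Local Open Scope ring_scope.

Lemma qF0 (F : finFieldType) : (3%:R : F) = 0 -> forall r, #|F| = (3 ^ r)%N -> (#|F|%:R : F) = 0.
Proof.
move=> h3 r hr; rewrite hr natrX h3 expr0n.
case: r hr => [|r] //= hr; have := finNzRing_gt1 F; by rewrite hr.
Qed.

Lemma unit_pow (F : finFieldType) (x : F) : x != 0 -> x ^+ #|F|.-1 = 1.
Proof.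
move=> nz; apply: (mulIf nz); rewrite mul1r -exprSr prednK ?expf_card //.
by apply: leq_ltn_trans (finNzRing_gt1 F).
Qed.

Lemma sum_ind (F : finFieldType) (d : F) (f : F -> F) :
  \sum_(c : F) (c == d)%:R * f c = f d.
Proof.
rewrite (bigD1 d) //= eqxx mul1r big1 ?addr0 // => c /negbTE ->; by rewrite mul0r.
Qed.

Lemma sum_one (F : finFieldType) (q0 : (#|F|%:R : F) = 0) : \sum_(c : F) (1 : F) = 0.
Proof. by rewrite sumr_const cardT -cardE q0. Qed.

Lemma psum (F : finFieldType) (q0 : (#|F|%:R : F) = 0) j :
  \sum_(x : F) x ^+ j = if (0 < j)%N && (#|F|.-1 %| j)%N then -1 else 0.
Proof.
have q1 : (0 < #|F|.-1)%N by have := finNzRing_gt1 F; case: #|F| => [|[]].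
case: j => [|j]; first by rewrite /= (eq_bigr (fun _ => 1)) ?sum_one // => x; rewrite expr0.
set Q := #|F|.-1; rewrite /=.
case: ifP => hd.
  rewrite (eq_bigr (fun x => 1 - (x == 0)%:R * 1)); last first.
    move=> x _; case: eqP => [->|/eqP nz]; first by rewrite expr0n /= mul1r subrr.
    by rewrite mul0r subr0 -(divnK hd) mulnC exprM unit_pow // expr1n.
  by rewrite sumrB sum_one // sum_ind sub0r.
have hk : (0 < j.+1 %% Q)%N by rewrite lt0n -/(Q %| j.+1)%N hd.
have kQ : (j.+1 %% Q < Q)%N by rewrite ltn_pmod.
have [a /andP [anz aj]] : exists a : F, (a != 0) && (a ^+ j.+1 != 1).
  case: (boolP [exists x : F, (x != 0) && (x ^+ j.+1 != 1)]) => [/existsP //|].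
  rewrite negb_exists => /forallP H; exfalso.
  pose rs := enum (predC1 (0 : F)).
  have : (size rs < size (('X^(j.+1 %% Q) - 1)%R : {poly F}))%N.
    apply: max_poly_roots.
    - by rewrite -size_poly_eq0 size_XnsubC.
    - apply/allP => x; rewrite mem_enum => xnz.
      have := H x; rewrite inE in xnz; rewrite xnz /= negbK => /eqP hx.
      rewrite /root !hornerE subr_eq0; apply/eqP.
      by rewrite -hx {2}(divn_eq j.+1 Q) exprD mulnC exprM unit_pow // expr1n mul1r.
    - exact: enum_uniq.
  rewrite size_XnsubC // ltnS /rs -cardE cardC1 -/Q.
  by rewrite leqNgt kQ.
have : \sum_(x : F) x ^+ j.+1 = a ^+ j.+1 * \sum_(x : F) x ^+ j.+1.
  rewrite [LHS](reindex_inj (mulfI anz)) mulr_sumr.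
  by apply: eq_bigr => x _; rewrite exprMn.
set S := \sum_(x : F) _.
move/eqP; rewrite -subr_eq0 -{1}(mul1r S) -mulrBl mulf_eq0 subr_eq0 eq_sym (negbTE aj) /=.
by move/eqP.
Qed.

Lemma geo (R : comNzRingType) n (y : R) : (y - 1) * \sum_(k < n) y ^+ k = y ^+ n - 1.
Proof.
elim: n => [|n IH]; first by rewrite big_ord0 mulr0 expr0 subrr.
by rewrite big_ord_recr /= mulrDr IH exprSr; ring.
Qed.

Lemma natQ (F : finFieldType) (q0 : (#|F|%:R : F) = 0) : (#|F|.-1%:R : F) = -1.
Proof.
have := finNzRing_gt1 F; case E: #|F| => [|n] // _.
by move: q0; rewrite E /= -addn1 natrD => /eqP; rewrite addr_eq0 => /eqP.
Qed.

Lemma tpoly_val (F : finFieldType) (q0 : (#|F|%:R : F) = 0) (y : F) :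
  tpoly #|F| y = y + (y == 0)%:R - (y == 1)%:R.
Proof.
rewrite /tpoly.
have gt1 := finNzRing_gt1 F.
case: (eqVneq y 0) => [->|y0].
  case E: #|F|.-1 => [|m]; first by move: gt1; case: #|F| E => [|[]].
  rewrite big_ord_recl expr0 big1 ?addr0; last by move=> i _; rewrite expr0n.
  by rewrite (eq_sym 0) oner_eq0 subr0.
case: (eqVneq y 1) => [->|y1].
  rewrite (eq_bigr (fun _ => 1)) ?sumr_const ?card_ord; last by move=> *; rewrite expr1n.
  by rewrite natQ // addr0 subrr.
rewrite addr0 subr0.
have : (y - 1) * \sum_(k < #|F|.-1) y ^+ k = 0 by rewrite geo unit_pow // subrr.
by move/eqP; rewrite mulf_eq0 subr_eq0 (negbTE y1) /= => /eqP ->; rewrite addr0.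
Qed.

Lemma tpoly_val2 (F : finFieldType) (q0 : (#|F|%:R : F) = 0) (y : F) :
  tpoly #|F| y = if y == 0 then 1 else if y == 1 then 0 else y.
Proof.
rewrite tpoly_val //; case: (eqVneq y 0) => [->|y0]; first by rewrite (eq_sym (0:F) 1) oner_eq0 add0r subr0.
case: (eqVneq y 1) => [->|y1]; first by rewrite addr0 subrr.
by rewrite addr0 subr0.
Qed.

Lemma tinv (F : finFieldType) (q0 : (#|F|%:R : F) = 0) (y : F) :
  tpoly #|F| (tpoly #|F| y) = y.
Proof.
rewrite !(tpoly_val2 q0).
case: (eqVneq y 0) => [->|y0] /=; first by rewrite oner_eq0 eqxx.
case: (eqVneq y 1) => [->|y1] /=; first by rewrite eqxx.
by rewrite (negbTE y0) (negbTE y1).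
Qed.

Lemma tinj (F : finFieldType) (q0 : (#|F|%:R : F) = 0) : injective (tpoly #|F| : F -> F).
Proof. exact: (can_inj (tinv q0)). Qed.

Lemma powinv (F : finFieldType) (x : F) : (2 < #|F|)%N -> x ^+ (#|F| - 2) = x^-1.
Proof.
move=> h2; case: (eqVneq x 0) => [->|xnz]; first by rewrite invr0 expr0n subn_eq0 leqNgt h2.
apply: (mulIf xnz); rewrite mulVf // -exprSr -(unit_pow xnz); congr (_ ^+ _).
by lia.
Qed.

Lemma powinv3 (F : finFieldType) (x : F) : (4 < #|F|)%N -> x ^+ (#|F| - 4) = x^-1 ^+ 3.
Proof.
move=> h4; case: (eqVneq x 0) => [->|xnz].
  by rewrite invr0 !expr0n subn_eq0 leqNgt h4.
have x3 : x ^+ 3 != 0 by rewrite expf_neq0.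
apply: (mulIf x3); rewrite -exprMn mulVf // expr1n -exprD -(unit_pow xnz); congr (_ ^+ _).
by lia.
Qed.

Lemma cube_inj (F : finFieldType) (h3 : (3%:R : F) = 0) : injective (fun x : F => x ^+ 3).
Proof.
move=> x y /= h.
have e : (x - y) ^+ 3 = x ^+ 3 - y ^+ 3 - 3%:R * (x ^+ 2 * y - x * y ^+ 2) by ring.
by move: e; rewrite h h3 mul0r subr0 subrr => /eqP; rewrite expf_eq0 /= subr_eq0 => /eqP.
Qed.

Lemma inv_inj (F : finFieldType) : injective (fun x : F => x^-1).
Proof. exact: invr_inj. Qed.

Lemma sum_reindex (F : finFieldType) (f : F -> F) (g : F -> F) :
  injective f -> \sum_(x : F) g (f x) = \sum_(x : F) g x.
Proof. by move=> fi; rewrite [RHS](reindex_inj fi). Qed.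

Lemma sum_id0 (F : finFieldType) (q0 : (#|F|%:R : F) = 0) (h3 : (3 < #|F|)%N) :
  \sum_(x : F) x = 0.
Proof.
rewrite (eq_bigr (fun x => x ^+ 1)); last by move=> x _; rewrite expr1.
rewrite psum // dvdn1; have -> : (#|F|.-1 == 1)%N = false by apply/eqP; lia.
by [].
Qed.

Lemma sum_inj0 (F : finFieldType) (q0 : (#|F|%:R : F) = 0) (h3 : (3 < #|F|)%N) (f : F -> F) :
  injective f -> \sum_(x : F) f x = 0.
Proof. by move=> fi; rewrite (sum_reindex id fi) sum_id0. Qed.

Local Close Scope ring_scope.


Lemma dvd_small Q s : (0 < s)%N -> (s < 2 * Q)%N -> (Q %| s)%N = (s == Q).
Proof.
move=> s0 s2; apply/idP/eqP => [/dvdnP [c hc]|->]; last exact: dvdnn.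
subst s; case: c s0 s2 => [|[|c]] s0 s2; [by rewrite mul0n in s0| by rewrite mul1n| nia].
Qed.

Lemma red_match q m mi : (0 < mi)%N -> (mi <= q.-1)%N ->
  ((0 < m + (q.-1 - mi)) && (q.-1 %| m + (q.-1 - mi)))%N = (red_exp q m == mi).
Proof.
move=> m0 mQ; rewrite /red_exp; set Q := q.-1 in mQ *.
case: m => [|k] /=.
  rewrite add0n; case: (ltnP 0 (Q - mi)) => h /=; last by rewrite eq_sym; case: mi m0 {mQ h}.
  have : ~~ (Q %| Q - mi)%N by apply/negP => /(dvdn_leq h); lia.
  by move/negbTE ->; rewrite eq_sym; case: mi m0 {mQ h}.
rewrite {1}(divn_eq k Q) -addnS -addnA dvdn_addr ?dvdn_mull //.
have rQ : (k %% Q < Q)%N by rewrite ltn_pmod //; lia.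
move: (k %% Q) rQ => r rQ.
rewrite dvd_small; last (by lia); last by lia.
apply/eqP/eqP; lia.
Qed.

Local Open Scope ring_scope.

Definition i0 : 'I_3 := @Ordinal 3 0 isT.
Definition i1 : 'I_3 := @Ordinal 3 1 isT.
Definition i2 : 'I_3 := @Ordinal 3 2 isT.
Definition v3 (F : nzRingType) (a b c : F) : 'I_3 -> F := fun i => nth 0 [:: a; b; c] i.

Lemma ord3P (P : 'I_3 -> Prop) : P i0 -> P i1 -> P i2 -> forall i, P i.
Proof.
move=> h0 h1 h2 [[|[|[|k]]] hk] //.
- by have -> : Ordinal hk = i0 by apply: val_inj.
- by have -> : Ordinal hk = i1 by apply: val_inj.
- by have -> : Ordinal hk = i2 by apply: val_inj.
Qed.

Lemma red_eq q (m' m : 'X_{1..3}) : (red_mnm q m' == m) =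
  [&& red_exp q (m' i0) == m i0, red_exp q (m' i1) == m i1 & red_exp q (m' i2) == m i2].
Proof.
apply/eqP/and3P => [<-|[/eqP h0 /eqP h1 /eqP h2]]; first by rewrite !mnmE.
by apply/mnmP; apply: ord3P; rewrite mnmE.
Qed.

Lemma mevalv3 (F : comNzRingType) (P : {mpoly F[3]}) a b c :
  P.@[v3 a b c] = \sum_(m <- msupp P) P@_m * (a ^+ m i0 * b ^+ m i1 * c ^+ m i2).
Proof.
rewrite mevalE; apply: eq_bigr => m _; congr (_ * _).
rewrite !big_ord_recl big_ord0 mulr1 mulrA; congr (_ * _ * _); congr (_ ^+ m _); by apply: val_inj.
Qed.

Lemma sum3 (F : finFieldType) (k : F) (A B C : F -> F) :
  \sum_(a : F) \sum_(b : F) \sum_(c : F) k * (A a * B b * C c) =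
  k * ((\sum_(a : F) A a) * (\sum_(b : F) B b) * (\sum_(c : F) C c)).
Proof.
transitivity (\sum_(a : F) \sum_(b : F) (k * A a * B b) * \sum_(c : F) C c).
  apply: eq_bigr => a _; apply: eq_bigr => b _; rewrite mulr_sumr.
  by apply: eq_bigr => c _; ring.
under eq_bigr do rewrite -mulr_suml -mulr_sumr.
rewrite -mulr_suml.
transitivity (k * (\sum_(i : F) A i) * (\sum_(b : F) B b) * \sum_(c : F) C c); last by ring.
by rewrite -mulr_suml -mulr_sumr.
Qed.

Lemma coefA (F : finFieldType) (q0 : (#|F|%:R : F) = 0) (P : {mpoly F[3]}) (m : 'X_{1..3}) :
  (forall i, 0 < m i <= #|F|.-1)%N ->
  (reduce #|F| P)@_m = - \sum_(a : F) \sum_(b : F) \sum_(c : F)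
     P.@[v3 a b c] * (a ^+ (#|F|.-1 - m i0) * b ^+ (#|F|.-1 - m i1) * c ^+ (#|F|.-1 - m i2)).
Proof.
move=> hm; set Q := #|F|.-1.
rewrite /reduce raddf_sum /=.
under eq_bigr do rewrite mcoeffZ mcoeffX.
symmetry.
under eq_bigr do under eq_bigr do under eq_bigr do rewrite mevalv3 mulr_suml.
under eq_bigr do under eq_bigr do rewrite exchange_big.
under eq_bigr do rewrite exchange_big.
rewrite exchange_big -sumrN; apply: eq_bigr => m' _.
transitivity (- \sum_(a : F) \sum_(b : F) \sum_(c : F) P@_m' * (a ^+ (m' i0 + (Q - m i0)) *
   b ^+ (m' i1 + (Q - m i1)) * c ^+ (m' i2 + (Q - m i2)))).
  congr (- _); apply: eq_bigr => a _; apply: eq_bigr => b _; apply: eq_bigr => c _.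
  by rewrite !exprD; ring.
rewrite sum3 !psum //.
case/andP: (hm i0) => a0 b0; case/andP: (hm i1) => a1 b1; case/andP: (hm i2) => a2 b2.
rewrite !red_match // red_eq.
by case: (_ == m i0); case: (_ == m i1); case: (_ == m i2); rewrite /= ?mulr0 ?mul0r ?mulr1; ring.
Qed.

Lemma red_exp_le q e : (0 < q.-1)%N -> (red_exp q e <= q.-1)%N.
Proof. by move=> hq; rewrite /red_exp; case: e => //= k; rewrite ltn_pmod. Qed.

Lemma reduce_supp (R : comNzRingType) q (P : {mpoly R[3]}) m : (0 < q.-1)%N ->
  m \in msupp (reduce q P) -> forall i, (m i <= q.-1)%N.
Proof.
move=> hq hm i; rewrite leqNgt; apply/negP => hi; move: hm.
rewrite mcoeff_msupp /reduce raddf_sum big1 ?eqxx // => m' _.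
change ((P@_m' *: 'X_[red_mnm q m'])@_m = 0); rewrite mcoeffZ mcoeffX.
case: eqP => [he|_]; last by rewrite mulr0.
by move: hi; rewrite -he mnmE ltnNge red_exp_le.
Qed.

Lemma tdeg_eq (R : comNzRingType) n (P : {mpoly R[n]}) N :
  (forall m, m \in msupp P -> (mdeg m <= N)%N) ->
  (exists2 m, m \in msupp P & mdeg m = N) -> tdeg P = N.
Proof.
move=> hup [m hm hN]; rewrite /tdeg; apply/eqP; rewrite -eqSS prednK; last first.
  by apply: leq_ltn_trans (msize_mdeg_lt hm).
rewrite eqn_leq; apply/andP; split; last by rewrite -hN; exact: msize_mdeg_lt.
by rewrite msizeE; apply/bigmax_leqP_seq => m' hm' _; exact: hup.
Qed.

Lemma psum_small (F : finFieldType) (q0 : (#|F|%:R : F) = 0) j :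
  (0 < j < #|F|.-1)%N -> \sum_(x : F) x ^+ j = 0.
Proof.
move=> /andP [j0 jQ]; rewrite psum // j0 /=.
case: ifP => // /(dvdn_leq j0); by rewrite leqNgt jQ.
Qed.

Lemma psum_inv_small (F : finFieldType) (q0 : (#|F|%:R : F) = 0) j :
  (0 < j < #|F|.-1)%N -> \sum_(x : F) x^-1 ^+ j = 0.
Proof.
by move=> h; rewrite (sum_reindex (fun x => x ^+ j) (@invr_inj F)) psum_small.
Qed.

Lemma eq_shift (F : finFieldType) (v c w : F) : (v + c == w) = (c == w - v).
Proof. by apply/eqP/eqP => h; [rewrite -h; ring | rewrite h; ring]. Qed.

Lemma mulfV' (F : finFieldType) (c : F) : c * c^-1 = 1 - (c == 0)%:R.
Proof.
case: (eqVneq c 0) => [->|cnz]; first by rewrite invr0 mulr0 subrr.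
by rewrite mulfV // subr0.
Qed.

Lemma sum_ind1 (F : finFieldType) (d : F) : \sum_(c : F) (c == d)%:R = 1 :> F.
Proof. by rewrite -[RHS](sum_ind d (fun _ => 1)); apply: eq_bigr => c _; rewrite mulr1. Qed.

Definition Psi (F : fieldType) (v : F) := - v^-1 - (1 - v)^-1.

Lemma inner3 (F : finFieldType) (q0 : (#|F|%:R : F) = 0) (h8 : (8 < #|F|)%N) (v : F) :
  \sum_(c : F) tpoly #|F| (v + c ^+ (#|F| - 2)) * c = -1 + Psi v.
Proof.
have h2 : (2 < #|F|)%N by lia.
under eq_bigr do rewrite powinv //.
transitivity (\sum_(c : F) (fun c => tpoly #|F| (v + c) * c^-1) c^-1).
  by apply: eq_bigr => c _; rewrite /= invrK.
rewrite (sum_reindex (fun c => tpoly #|F| (v + c) * c^-1) (@invr_inj F)).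
have e : forall c : F, tpoly #|F| (v + c) * c^-1 =
   v * c^-1 + (1 - (c == 0)%:R) + (c == - v)%:R * c^-1 - (c == 1 - v)%:R * c^-1.
  move=> c; rewrite tpoly_val // !eq_shift sub0r -mulfV'; ring.
under eq_bigr do rewrite e.
rewrite !big_split /= ?sumrN.
have h3 : (3 < #|F|)%N by lia.
rewrite sum_one // sum_ind1 !sum_ind -mulr_sumr (sum_inj0 q0 h3 (@invr_inj F)).
by rewrite /Psi invrN; ring.
Qed.

Lemma PsiT (F : finFieldType) (q0 : (#|F|%:R : F) = 0) (y : F) : Psi (tpoly #|F| y) = Psi y.
Proof.
rewrite tpoly_val2 // /Psi.
case: (eqVneq y 0) => [->|y0] /=; first by rewrite ?subrr ?subr0 ?invr0 ?invr1 ?oppr0 ?sub0r ?subr0 ?addr0.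
case: (eqVneq y 1) => [->|y1] /=; first by rewrite ?subrr ?subr0 ?invr0 ?invr1 ?oppr0 ?sub0r ?subr0 ?addr0.
by [].
Qed.

Lemma L1 (F : finFieldType) (q0 : (#|F|%:R : F) = 0) (h8 : (8 < #|F|)%N) (c : F) :
  \sum_(b : F) b^-1 * (c + b)^-1 = 2%:R * c^-1 ^+ 2.
Proof.
have h3 : (3 < #|F|)%N by lia.
case: (eqVneq c 0) => [->|cnz].
  under eq_bigr do rewrite add0r -expr2.
  by rewrite psum_inv_small ?invr0 ?expr0n ?mulr0 //; apply/andP; split; lia.
have e : forall b : F, b^-1 * (c + b)^-1 =
  c^-1 * (b^-1 - (c + b)^-1) + c^-1 ^+ 2 * ((b == 0)%:R + (b == - c)%:R).
  move=> b; case: (eqVneq b 0) => [->|bnz].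
    rewrite eq_sym oppr_eq0 (negbTE cnz) invr0 addr0 mul0r /= ?mulr1n ?mulr0n; ring.
  case: (eqVneq b (- c)) => [->|bc].
    rewrite subrr invr0 invrN /= ?mulr1n ?mulr0n; ring.
  have cb : c + b != 0 by rewrite addr_eq0 -eqr_oppLR eq_sym.
  rewrite /= ?mulr0n ?addr0 ?mulr0; field.
  by rewrite cnz bnz cb.
under eq_bigr do rewrite e.
rewrite big_split /= -!mulr_sumr sumrB big_split /= !sum_ind1.
rewrite (sum_reindex (fun x => x^-1) (@addrI F c)) subrr; ring.
Qed.

Lemma L2 (F : finFieldType) (q0 : (#|F|%:R : F) = 0) (h8 : (8 < #|F|)%N) (d : F) :
  \sum_(b : F) b^-1 * (d - b)^-1 = - (2%:R * d^-1 ^+ 2).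
Proof.
have e : forall b : F, b^-1 * (d - b)^-1 = - (b^-1 * (- d + b)^-1).
  by move=> b; rewrite -mulrN -invrN opprD opprK addrC.
under eq_bigr do rewrite e.
by rewrite sumrN L1 // invrN sqrrN.
Qed.

Lemma inner2 (F : finFieldType) (q0 : (#|F|%:R : F) = 0) (h8 : (8 < #|F|)%N) (d : F) :
  \sum_(b : F) b * (-1 + Psi (tpoly #|F| (d + b ^+ (#|F| - 2)))) =
  2%:R * ((1 - d)^-1 ^+ 2 - d^-1 ^+ 2).
Proof.
have h2 : (2 < #|F|)%N by lia.
have h3 : (3 < #|F|)%N by lia.
under eq_bigr do rewrite PsiT // powinv //.
transitivity (\sum_(b : F) (fun b => b^-1 * (-1 + Psi (d + b))) b^-1).
  by apply: eq_bigr => b _; rewrite /= invrK.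
rewrite (sum_reindex (fun b => b^-1 * (-1 + Psi (d + b))) (@invr_inj F)).
have e : forall b : F, b^-1 * (-1 + Psi (d + b)) =
   - b^-1 - b^-1 * (d + b)^-1 - b^-1 * ((1 - d) - b)^-1.
  move=> b; rewrite /Psi; have -> : 1 - (d + b) = (1 - d) - b by ring.
  ring.
under eq_bigr do rewrite e.
rewrite !sumrB sumrN (sum_inj0 q0 h3 (@invr_inj F)) L1 // L2 //; ring.
Qed.

Lemma one_sub_inj (F : finFieldType) : injective (fun a : F => 1 - a).
Proof. by apply: (can_inj (g := fun a : F => 1 - a)) => a; rewrite opprB addrC subrK. Qed.

Lemma sumw (F : finFieldType) (q0 : (#|F|%:R : F) = 0) j : (0 < j < #|F|.-1)%N ->
  \sum_(a : F) (1 - a)^-1 ^+ j = 0.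
Proof.
move=> h; rewrite (sum_reindex (fun x : F => x^-1 ^+ j) (@one_sub_inj F)).
exact: psum_inv_small.
Qed.

Lemma L3 (F : finFieldType) (q0 : (#|F|%:R : F) = 0) (h8 : (8 < #|F|)%N) :
  \sum_(a : F) a^-1 * (1 - a)^-1 ^+ 6 = - 7%:R.
Proof.
have h3 : (3 < #|F|)%N by lia.
have e : forall a : F, a^-1 * (1 - a)^-1 ^+ 6 =
  a^-1 + (1 - a)^-1 ^+ 1 + (1 - a)^-1 ^+ 2 + (1 - a)^-1 ^+ 3 + (1 - a)^-1 ^+ 4
  + (1 - a)^-1 ^+ 5 + (1 - a)^-1 ^+ 6 - 6%:R * (a == 0)%:R - (a == 1)%:R.
  move=> a; case: (eqVneq a 0) => [->|a0].
    rewrite subr0 invr1 invr0 expr1n (eq_sym 0) oner_eq0 /= ?mulr1n ?mulr0n; ring.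
  case: (eqVneq a 1) => [->|a1].
    rewrite subrr invr0 !expr0n /= ?mulr1n ?mulr0n invr1; ring.
  have b0 : 1 - a != 0 by rewrite subr_eq0 eq_sym.
  have -> : (false%:R : F) = 0 by []. field.
  by rewrite a0 b0.
under eq_bigr do rewrite e.
rewrite !sumrB !big_split /= (sum_inj0 q0 h3 (@invr_inj F)) !sumw //; try (apply/andP; split; lia).
rewrite sum_ind1 -mulr_sumr sum_ind1; ring.
Qed.

Definition G (F : finFieldType) (a b c : F) :=
  tpoly #|F| (tpoly #|F| (a ^+ (#|F| - 4) + b ^+ (#|F| - 2)) + c ^+ (#|F| - 2)).

Lemma Sval (F : finFieldType) (q0 : (#|F|%:R : F) = 0) (h3 : (3%:R : F) = 0) (h8 : (8 < #|F|)%N) :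
  \sum_(a : F) \sum_(b : F) \sum_(c : F) G a b c * (a ^+ 1 * b ^+ 1 * c ^+ 1) = - 14%:R.
Proof.
have h4 : (4 < #|F|)%N by lia.
have h3' : (3 < #|F|)%N by lia.
transitivity (\sum_(a : F) a * \sum_(b : F) b * (-1 + Psi (tpoly #|F| (a ^+ (#|F| - 4) + b ^+ (#|F| - 2))))).
  apply: eq_bigr => a _; rewrite mulr_sumr; apply: eq_bigr => b _.
  rewrite -inner3 // !mulr_sumr; apply: eq_bigr => c _; rewrite /G !expr1; ring.
under eq_bigr do rewrite inner2 // powinv3 //.
transitivity (\sum_(a : F) (fun a => a^-1 * (2%:R * ((1 - a ^+ 3)^-1 ^+ 2 - (a ^+ 3)^-1 ^+ 2))) a^-1).
  by apply: eq_bigr => a _; rewrite /= invrK.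
rewrite (sum_reindex (fun a => a^-1 * (2%:R * ((1 - a ^+ 3)^-1 ^+ 2 - (a ^+ 3)^-1 ^+ 2))) (@invr_inj F)).
have e : forall a : F, a^-1 * (2%:R * ((1 - a ^+ 3)^-1 ^+ 2 - (a ^+ 3)^-1 ^+ 2)) =
   2%:R * (a^-1 * (1 - a)^-1 ^+ 6) - 2%:R * a^-1 ^+ 7.
  move=> a; have -> : 1 - a ^+ 3 = (1 - a) ^+ 3.
    have -> : (1 - a) ^+ 3 = 1 - a ^+ 3 - 3%:R * (a - a ^+ 2) by ring.
    by rewrite h3 mul0r subr0.
  rewrite -!(exprVn (_ : F) 3) -!exprM; ring.
under eq_bigr do rewrite e.
rewrite sumrB -!mulr_sumr L3 // psum_inv_small //; last by apply/andP; split; lia.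
ring.
Qed.

Lemma Vanish (F : finFieldType) (q0 : (#|F|%:R : F) = 0) (h3 : (3%:R : F) = 0) (h8 : (8 < #|F|)%N)
  e0 e1 e2 : [|| e0 == 0, e1 == 0 | e2 == 0]%N ->
  \sum_(a : F) \sum_(b : F) \sum_(c : F) G a b c * (a ^+ e0 * b ^+ e1 * c ^+ e2) = 0.
Proof.
have h2 : (2 < #|F|)%N by lia.
have h4 : (4 < #|F|)%N by lia.
have h3' : (3 < #|F|)%N by lia.
have ipow2 : injective (fun c : F => c ^+ (#|F| - 2)).
  by move=> x y /=; rewrite !powinv //; exact: invr_inj.
have ipow4 : injective (fun c : F => c ^+ (#|F| - 4)).
  by move=> x y /=; rewrite !powinv3 // => /cube_inj -/(_ h3); exact: invr_inj.
case/or3P => /eqP ->.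
- rewrite exchange_big; apply: big1 => b _; rewrite exchange_big; apply: big1 => c _.
  transitivity ((b ^+ e1 * c ^+ e2) * \sum_(a : F) G a b c).
    by rewrite mulr_sumr; apply: eq_bigr => a _; rewrite expr0; ring.
  rewrite (sum_inj0 q0 h3') ?mulr0 // => x y /tinj -/(_ q0) /addIr /tinj -/(_ q0) /addIr.
  exact: ipow4.
- apply: big1 => a _; rewrite exchange_big; apply: big1 => c _.
  transitivity ((a ^+ e0 * c ^+ e2) * \sum_(b : F) G a b c).
    by rewrite mulr_sumr; apply: eq_bigr => b _; rewrite expr0; ring.
  rewrite (sum_inj0 q0 h3') ?mulr0 // => x y /tinj -/(_ q0) /addIr /tinj -/(_ q0) /addrI.
  exact: ipow2.
- apply: big1 => a _; apply: big1 => b _.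
  transitivity ((a ^+ e0 * b ^+ e1) * \sum_(c : F) G a b c).
    by rewrite mulr_sumr; apply: eq_bigr => c _; rewrite expr0; ring.
  rewrite (sum_inj0 q0 h3') ?mulr0 // => x y /tinj -/(_ q0) /addrI.
  exact: ipow2.
Qed.

Lemma meval_tpoly (R : comNzRingType) n (v : 'I_n -> R) q (p : {mpoly R[n]}) :
  (tpoly q p).@[v] = tpoly q p.@[v].
Proof.
rewrite /tpoly rmorphD rmorph_sum; congr (_ + _); apply: eq_bigr => k _.
by rewrite rmorphXn.
Qed.

Lemma mevalXn' (R : comNzRingType) n (v : 'I_n -> R) (p : {mpoly R[n]}) k :
  (p ^+ k).@[v] = p.@[v] ^+ k.
Proof. exact: rmorphXn. Qed.

Unset Implicit Arguments.

Theorem mainTheorem16 (F : finFieldType) (r : nat) :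
  #|F| = (3 ^ r)%N -> (3 < 3 ^ r)%N ->
  let q := #|F| in
  let x1 : {mpoly F[3]} := 'X_(@Ordinal 3 0 isT) in
  let x2 : {mpoly F[3]} := 'X_(@Ordinal 3 1 isT) in
  let x3 : {mpoly F[3]} := 'X_(@Ordinal 3 2 isT) in
  let f2bar := tpoly q (x1 ^+ (q - 4) + x2 ^+ (q - 2)) in
  tdeg (reduce q (tpoly q (f2bar + x3 ^+ (q - 2)))) = (3 * (q - 2))%N.
Proof.
move=> hF h3r q x1 x2 x3 f2bar.
have h3 : (3%:R : F) = 0 by apply: pcharf0; exact: (card_finPcharP hF).
have q0 := qF0 h3 hF.
have h8 : (8 < #|F|)%N.
  rewrite hF; case: r h3r {hF} => [|[|r]] //= _; rewrite !expnS; have := expn_gt0 3 r; lia.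
set P := tpoly q (f2bar + x3 ^+ (q - 2)).
have evalP : forall a b c, P.@[v3 a b c] = G a b c.
  move=> a b c; rewrite /P /f2bar.
  rewrite (meval_tpoly (R := F)) mevalD (meval_tpoly (R := F)) mevalD !mevalXn' !mevalXU.
  by [].
apply: (@tdeg_eq F 3).
- move=> m hm; have hle := reduce_supp (m := m) (q := q) (P := P) ltac:(rewrite /q; lia) hm.
  rewrite leqNgt; apply/negP => hgt.
  have hdeg : mdeg m = (m i0 + m i1 + m i2)%N.
    rewrite mdegE !big_ord_recl big_ord0 addn0 addnA.
    by congr (m _ + m _ + m _)%N; apply: val_inj.
  move: hm; rewrite mcoeff_msupp coefA //; last first.
    apply: ord3P; apply/andP; split; have := hle i0; have := hle i1; have := hle i2;
      rewrite /q in hgt * => *; lia.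
  under eq_bigr do under eq_bigr do under eq_bigr do rewrite evalP.
  rewrite Vanish // ?oppr0 ?eqxx //.
  have := hle i0; have := hle i1; have := hle i2; rewrite /q in hgt * => *.
  apply/or3P; case: (ltnP (m i0) #|F|.-1) => ?; last (by constructor 1; apply/eqP; lia).
  case: (ltnP (m i1) #|F|.-1) => ?; last (by constructor 2; apply/eqP; lia).
  constructor 3; apply/eqP; lia.
- exists [multinom (q - 2)%N | _ < 3]; last first.
    by rewrite mdegE !big_ord_recl big_ord0 !mnmE; lia.
  rewrite mcoeff_msupp coefA //; last first.
    by move=> i; rewrite mnmE /q; apply/andP; split; lia.
  under eq_bigr do under eq_bigr do under eq_bigr do rewrite evalP.
  rewrite !mnmE.
  have -> : (#|F|.-1 - (q - 2))%N = 1%N by rewrite /q; lia.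
  rewrite Sval // opprK.
  have -> : (14%:R : F) = 2%:R + 3%:R * 4%:R by rewrite -natrM -natrD.
  rewrite h3 mul0r addr0.
  apply/eqP => h2; have e1 : (1 : F) = 3%:R - 2%:R by rewrite -natrB.
  by move: e1; rewrite h3 h2 subrr => /eqP; rewrite oner_eq0.
Qed.
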